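(* For an integer $k\ge 3$, let $G_k$ be the plane graph obtained from a cycle $w_0w_1\cdots w_{k-1}w_0$ by adding, for each $i\in\{0,\dots,k-1\}$, a new vertex $p_i$ in the outer face adjacent to $w_i$ and $w_{i+1}$ (indices modulo $k$), embedded so that the result is plane (the cycle bounds an inner face $f_1$, each $p_iw_iw_{i+1}$ bounds a triangular face, and the remaining face is the outer face $f_2$). Then $G_k$ is internally 3-connected, and every spanning tree of the plane dual $G_k^*$ has maximum degree at least $\lceil k/2\rceil$.
   Context: A plane graph is internally 3-connected if it is 2-connected and every 2-vertex cut consists of two vertices of the outer face boundary, each component of the graph minus the cut containing an outer-face vertex. $G_k^*$ denotes the plane dual of $G_k$, which may contain multiple edges. *)

(* Defs.v *)
(* Plane graphs are encoded by rotation systems (combinatorial maps). *)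
From mathcomp Require Import all_boot.
Set Implicit Arguments.
Unset Strict Implicit.
Unset Printing Implicit Defensive.

(* Generic notions for a plane graph given by a simple graph adj (symmetric,  *)
(* irreflexive) on a finite vertex type V together with a rotation system:    *)
(* cw v u is the neighbour of v that follows the neighbour u in clockwise     *)
(* order around v.  Darts are ordered pairs (u,v) with adj u v.  Faces are the *)
(* orbits of the face-tracing permutation phi (u,v) = (v, cw v u), seen as    *)
(* sets of darts.                                                             *)
Section PlaneMap.
Variables (V : finType) (adj : rel V) (cw : V -> V -> V).

Definition darts : {set V * V} := [set d : V * V | adj d.1 d.2].
Definition phi (d : V * V) : V * V := (d.2, cw d.2 d.1).
Definition face_of (d : V * V) : {set V * V} := [set d' | fconnect phi d d'].
Definition faces : {set {set V * V}} := [set face_of d | d in darts].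
Definition edge_of (d : V * V) : {set V} := [set d.1; d.2].
Definition gedges : {set {set V}} := [set edge_of d | d in darts].

(* The plane dual G^* (a multigraph): its vertices are the faces, and each    *)
(* edge e of G gives a dual edge joining the (one or two) faces incident to e. *)
Definition incident (F : {set V * V}) (e : {set V}) : bool :=
  [exists d in F, edge_of d == e].
Definition dual_adj (T : {set {set V}}) : rel {set V * V} :=
  fun F G => [&& F \in faces, G \in faces &
                 [exists e in T, incident F e && incident G e]].
Definition dual_connected (T : {set {set V}}) : Prop :=
  forall F G, F \in faces -> G \in faces -> connect (dual_adj T) F G.
Definition dual_spanning_tree (T : {set {set V}}) : Prop :=
  [/\ T \subset gedges, dual_connected T &
      forall e, e \in T -> ~ dual_connected (T :\ e)].
Definition dual_deg (T : {set {set V}}) (F : {set V * V}) : nat :=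
  #|[set e in T | incident F e]|.

Definition avoid (S : {set V}) : rel V :=
  fun x y => [&& adj x y, x \notin S & y \notin S].
Definition connected_avoiding (S : {set V}) : Prop :=
  forall x y, x \notin S -> y \notin S -> connect (avoid S) x y.
Definition two_connected : Prop :=
  [/\ 2 < #|V|, connected_avoiding set0 & forall x, connected_avoiding [set x]].
Definition boundary_vertices (F : {set V * V}) : {set V} := [set d.1 | d in F].
Definition internally_3_connected (outer : {set V * V}) : Prop :=
  two_connected /\
  forall x y, x != y -> ~ connected_avoiding [set x; y] ->
    [/\ x \in boundary_vertices outer, y \in boundary_vertices outer &
        forall z, z \notin [set x; y] ->
          exists2 o, o \in boundary_vertices outer :\: [set x; y] &
                     connect (avoid [set x; y]) z o].
End PlaneMap.

(* The plane graph G_k.  inl i = w_i, inr i = p_i (indices in 'I_k, mod k).   *)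
(* Embedding: w_0..w_{k-1} counterclockwise on a circle, p_i outside near the *)
(* edge w_i w_{i+1}.  Clockwise order around w_i:                             *)
(*    w_{i-1} -> w_{i+1} -> p_i -> p_{i-1} -> w_{i-1};  around p_i: swap.      *)
Section Gk.
Variable k : nat.
Definition GkV : finType := ('I_k + 'I_k)%type.
Notation w := (@inl 'I_k 'I_k).
Notation p := (@inr 'I_k 'I_k).

Definition Gk_adj : rel GkV := fun x y =>
  match x, y with
  | inl i, inl j => (j == ordS i) || (i == ordS j)
  | inl i, inr j => (i == j) || (i == ordS j)
  | inr i, inl j => (j == i) || (j == ordS i)
  | inr _, inr _ => false
  end.

Definition Gk_cw (v u : GkV) : GkV :=
  match v, u with
  | inl i, inl j => if j == ord_pred i then w (ordS i)
                    else if j == ordS i then p i else u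
  | inl i, inr j => if j == i then p (ord_pred i)
                    else if j == ord_pred i then w (ord_pred i) else u
  | inr i, inl j => if j == i then w (ordS i)
                    else if j == ordS i then w i else u
  | inr _, inr _ => u
  end.

Definition Gk_outer : {set GkV * GkV} :=
  [set d | [exists i : 'I_k, d \in face_of Gk_cw (p i, w i)]].
End Gk.
Arguments Gk_adj k : clear implicits.
Arguments Gk_cw k : clear implicits.
Arguments Gk_outer k : clear implicits.

(* Main.v *)
Require Import Defs.
From mathcomp Require Import all_boot.
From mathcomp Require Import zify.
Set Implicit Arguments. Unset Strict Implicit. Unset Printing Implicit Defensive.

Definition ix (n m : nat) : 'I_n.+1 := Ordinal (ltn_pmod m (ltn0Sn n)).

Lemma ix_val n (i : 'I_n.+1) : ix n i = i.
Proof. apply: val_inj => /=; exact: modn_small. Qed.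

Lemma ordS_ix n m : ordS (ix n m) = ix n m.+1.
Proof. apply: val_inj => /=. by rewrite -addn1 modnDml addn1. Qed.

Lemma ord_pred_ix n m : ord_pred (ix n m.+1) = ix n m.
Proof. apply: val_inj => /=. by rewrite addnS /= modnDml addSnnS modnDr. Qed.

Lemma ix_k n : ix n n.+1 = ix n 0.
Proof. apply: val_inj => /=. by rewrite modnn mod0n. Qed.

Lemma ix_neq1 n m : 0 < n -> ix n m != ix n m.+1.
Proof.
move=> hn; apply/eqP => /(congr1 val) /= /eqP h.
have : m + 0 == m + 1 %[mod n.+1] by rewrite addn0 addn1.
rewrite eqn_modDl !modn_small //; lia.
Qed.

Lemma ix_neq2 n m : 1 < n -> ix n m != ix n m.+2.
Proof.
move=> hn; apply/eqP => /(congr1 val) /= /eqP h.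
have : m + 0 == m + 2 %[mod n.+1] by rewrite addn0 addn2.
rewrite eqn_modDl !modn_small //; lia.
Qed.

Lemma ordS_neq n (i : 'I_n.+1) : 0 < n -> i != ordS i.
Proof. move=> hn; rewrite -(ix_val i) ordS_ix; exact: ix_neq1. Qed.

Lemma ordS2_neq n (i : 'I_n.+1) : 1 < n -> i != ordS (ordS i).
Proof. move=> hn; rewrite -(ix_val i) !ordS_ix; exact: ix_neq2. Qed.

Lemma pred_neq_S n (i : 'I_n.+1) : 1 < n -> ord_pred i != ordS i.
Proof.
move=> hn; apply/eqP => h. have := ordS2_neq (ord_pred i) hn.
have e := @ord_predK _ i. by rewrite e -h eqxx.
Qed.

Lemma Gk_sym k : symmetric (Gk_adj k).
Proof.
by move=> [i|i] [j|j] //=; rewrite ?(eq_sym i j) // orbC.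
Qed.

Lemma avoid_sym k (S : {set GkV k}) : symmetric (avoid (Gk_adj k) S).
Proof. move=> x y; rewrite /avoid Gk_sym; by case: (x \in S); case: (y \in S); rewrite ?andbF. Qed.

Lemma up_path n (S : {set GkV n.+1}) b m :
  (forall t, t <= m -> (inl (ix n (b + t)) : GkV n.+1) \notin S) ->
  connect (avoid (Gk_adj n.+1) S) (inl (ix n b)) (inl (ix n (b + m))).
Proof.
elim: m => [|m IH] h; first by rewrite addn0.
apply: connect_trans (IH (fun t ht => h t (leqW ht))) _.
apply: connect1. rewrite /avoid /= h // h // ordS_ix addnS eqxx //.
Qed.

Lemma conn_from n (S : {set GkV n.+1}) z0 :
  (forall x, x \notin S -> connect (avoid (Gk_adj n.+1) S) z0 x) ->
  connected_avoiding (Gk_adj n.+1) S.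
Proof.
move=> h x y hx hy; apply: connect_trans (h y hy).
by rewrite (sym_connect_sym (@avoid_sym _ S)) h.
Qed.

Lemma reach_all n (S : {set GkV n.+1}) z0 :
  (forall l, (inl l : GkV n.+1) \notin S -> connect (avoid (Gk_adj n.+1) S) z0 (inl l)) ->
  (forall l, (inr l : GkV n.+1) \notin S ->
      ((inl l : GkV n.+1) \notin S) || ((inl (ordS l) : GkV n.+1) \notin S)) ->
  connected_avoiding (Gk_adj n.+1) S.
Proof.
move=> hw hp; apply: (@conn_from _ _ z0) => -[l|l] hx; first exact: hw.
case/orP: (hp l hx) => hl.
  apply: connect_trans (hw _ hl) (connect1 _).
  by rewrite /avoid /= eqxx hl hx.
apply: connect_trans (hw _ hl) (connect1 _).
by rewrite /avoid /= eqxx orbT hl hx.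
Qed.

Lemma conn_now n (S : {set GkV n.+1}) :
  (forall l, (inl l : GkV n.+1) \notin S) -> connected_avoiding (Gk_adj n.+1) S.
Proof.
move=> hS; apply: (@reach_all _ _ (inl (ix n 0))) => [l _|l _]; last by rewrite hS.
have := @up_path n S 0 l (fun t _ => hS _).
by rewrite add0n ix_val.
Qed.

Lemma conn_w n (j : 'I_n.+1) : 0 < n ->
  connected_avoiding (Gk_adj n.+1) [set (inl j : GkV n.+1)].
Proof.
move=> hn; apply: (@reach_all _ _ (inl (ix n j.+1))) => [l hl|l _]; last first.
  rewrite !in_set1 /=; case: (eqVneq l j) => [->|h].
    apply/orP; right; apply/eqP => -[h]; by move: (ordS_neq j hn); rewrite h eqxx.
  apply/orP; left; apply/eqP => -[e]; by rewrite e eqxx in h.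
rewrite in_set1 /= in hl.
have hlj : (l : nat) != j by apply: contra hl => /eqP h; apply/eqP; congr inl; exact: val_inj.
pose m := if j < l then l - j.+1 else l + n - j.
have hm : m < n.
  rewrite /m; case: ifP => hh; have := ltn_ord l; have := ltn_ord j; move: hlj hh; lia.
have hv : ix n (j.+1 + m) = l.
  apply: val_inj => /=; rewrite /m; case: ifP => h.
    rewrite subnKC // modn_small //.
  have -> : j.+1 + (l + n - j) = l + n.+1 by have := ltn_ord j; lia.
  by rewrite modnDr modn_small.
rewrite -hv; apply: up_path => t ht.
rewrite in_set1 /=; apply/eqP => -[] /(congr1 val) /= /eqP.
move=> h; have : j + t.+1 == j + 0 %[mod n.+1].
  by rewrite addn0 addnS -addSn (eqP h) modn_small.
rewrite eqn_modDl !modn_small //; lia.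
Qed.

Lemma bnd_all n (x : GkV n.+1) : x \in boundary_vertices (Gk_outer n.+1).
Proof.
case: x => [i|i]; apply/imsetP.
  exists (inl i, inr (ord_pred i)) => //.
  rewrite inE; apply/existsP; exists i; rewrite inE.
  have -> : (inl i, inr (ord_pred i)) = phi (Gk_cw n.+1) (inr i, inl i) by rewrite /phi /= eqxx.
  exact: fconnect1.
exists (inr i, inl i) => //.
rewrite inE; apply/existsP; exists i; rewrite inE; exact: connect0.
Qed.

Lemma part1 n : 1 < n -> internally_3_connected (Gk_adj n.+1) (Gk_outer n.+1).
Proof.
move=> hn; split.
  split.
  - rewrite card_sum card_ord; lia.
  - by apply: conn_now => l; rewrite in_set0.
  - move=> [j|j]; first by apply: conn_w; lia.
    by apply: conn_now => l; rewrite in_set1.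
move=> x y _ _; split; rewrite ?bnd_all // => z hz.
by exists z; [rewrite in_setD hz bnd_all | exact: connect0].
Qed.

Notation Wv n i := (@inl 'I_n.+1 'I_n.+1 i).
Notation Pv n i := (@inr 'I_n.+1 'I_n.+1 i).
Notation ph n := (phi (Gk_cw n.+1)).

Lemma F1_all n m :
  fconnect (ph n) (Wv n (ix n 0), Wv n (ix n 1)) (Wv n (ix n m), Wv n (ix n m.+1)).
Proof.
elim: m => [|m IH]; first exact: connect0.
apply: connect_trans IH (connect1 _).
by rewrite /frel /phi /= ord_pred_ix eqxx ordS_ix.
Qed.

Lemma F2_step n m : 0 < n ->
  fconnect (ph n) (Pv n (ix n m.+1), Wv n (ix n m.+1)) (Wv n (ix n m.+1), Pv n (ix n m)) /\
  fconnect (ph n) (Wv n (ix n m.+1), Pv n (ix n m)) (Pv n (ix n m), Wv n (ix n m)).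
Proof.
move=> hn; split; apply: connect1; rewrite /frel /phi /=.
  by rewrite eqxx ord_pred_ix.
have e : (@eq_op ('I_n.+1 : finType) (ix n m.+1) (ix n m)) = false.
  by rewrite eq_sym; apply: negbTE (ix_neq1 m hn).
by rewrite e ordS_ix eqxx.
Qed.

Lemma F2_down n a t : 0 < n ->
  fconnect (ph n) (Pv n (ix n (a + t)), Wv n (ix n (a + t))) (Pv n (ix n a), Wv n (ix n a)).
Proof.
move=> hn; elim: t => [|t IH]; first by rewrite addn0; exact: connect0.
rewrite addnS; have [h1 h2] := F2_step (a + t) hn.
exact: connect_trans (connect_trans h1 h2) IH.
Qed.

Lemma F2_all n (i : 'I_n.+1) : 0 < n ->
  fconnect (ph n) (Pv n (ix n 0), Wv n (ix n 0)) (Pv n i, Wv n i) /\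
  fconnect (ph n) (Pv n (ix n 0), Wv n (ix n 0)) (Wv n (ordS i), Pv n i).
Proof.
move=> hn; have hi := ltn_ord i; split.
  have := F2_down (i : nat) (n.+1 - i) hn.
  have -> : i + (n.+1 - i) = n.+1 by lia.
  by rewrite ix_k ix_val.
have := F2_down (i.+1) (n.+1 - i.+1) hn.
have -> : i.+1 + (n.+1 - i.+1) = n.+1 by lia.
rewrite ix_k => /connect_trans; apply.
have [h1 _] := F2_step i hn.
have e : ordS i = ix n i.+1 by rewrite -ordS_ix ix_val.
by rewrite ix_val in h1; rewrite e.
Qed.

Lemma fclosed_sub (T : finType) (f : T -> T) (A : {set T}) x y :
  (forall z, z \in A -> f z \in A) -> x \in A -> fconnect f x y -> y \in A.
Proof.
move=> hA hx /connectP [p]; elim: p x hx => [|z p IH] x hx /=; first by move=> _ ->.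
by case/andP => /eqP <- hp hl; apply: (IH _ (hA _ hx)).
Qed.

Definition Ai n (i : 'I_n.+1) : {set GkV n.+1 * GkV n.+1} :=
  [set (Wv n (ordS i), Wv n i); (Wv n i, Pv n i); (Pv n i, Wv n (ordS i))].

Lemma in3P (T : finType) (x a b c : T) :
  x \in [set a; b; c] -> [\/ x = a, x = b | x = c].
Proof. by rewrite !inE => /orP [/orP [/eqP ->|/eqP ->]|/eqP ->]; [constructor 1|constructor 2|constructor 3]. Qed.

Lemma neqF (T : eqType) (x y : T) : x <> y -> (x == y) = false.
Proof. by move/eqP/negbTE. Qed.

Lemma Ai_closed n (i : 'I_n.+1) : 1 < n ->
  forall z, z \in Ai i -> ph n z \in Ai i.
Proof.
move=> hn z /in3P [->|->|->]; rewrite /Ai /phi /= !inE.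
- rewrite (@neqF _ (ordS i) (ord_pred i)); last first.
    by move=> h; move: (pred_neq_S i hn); rewrite h eqxx.
  by rewrite eqxx /= eqxx ?orbT.
- by rewrite eqxx /= ?eqxx ?orbT.
- rewrite (@neqF _ i (ordS i)); last first.
    by move=> h; have := ordS_neq i (ltnW hn); rewrite -h eqxx.
  have e2 : ord_pred (ordS i) = i := @ordSK n.+1 i.
  by rewrite e2 eqxx eqxx.
Qed.

Lemma Ti_sub n (i : 'I_n.+1) d : 1 < n ->
  d \in face_of (Gk_cw n.+1) (Wv n (ordS i), Wv n i) -> d \in Ai i.
Proof.
move=> hn; rewrite inE; apply: fclosed_sub; first exact: Ai_closed.
by rewrite !inE eqxx.
Qed.

Definition E1 n (i : 'I_n.+1) : {set GkV n.+1} := [set Wv n (ordS i); Wv n i].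
Definition E2 n (i : 'I_n.+1) : {set GkV n.+1} := [set Wv n i; Pv n i].
Definition E3 n (i : 'I_n.+1) : {set GkV n.+1} := [set Pv n i; Wv n (ordS i)].
Definition Es n (i : 'I_n.+1) := [set E1 i; E2 i; E3 i].

Lemma mem_eqs (T : finType) (s t : {set T}) z : s = t -> z \in s -> z \in t.
Proof. by move=> ->. Qed.

Lemma edge_uniq n (i j : 'I_n.+1) e : 1 < n -> e \in Es i -> e \in Es j -> i = j.
Proof.
move=> hn /in3P [->|->|->] /in3P [h|h|h];
  try (have /set2P [|] := mem_eqs (z:=Pv n i) h (set22 _ _) ; by [|case]);
  try (have /set2P [|] := mem_eqs (z:=Pv n i) h (set21 _ _) ; by [|case]);
  try (have /set2P [|] := mem_eqs (z:=Pv n j) (esym h) (set22 _ _) ; by [|case]);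
  try (have /set2P [|] := mem_eqs (z:=Pv n j) (esym h) (set21 _ _) ; by [|case]).
have /set2P [[e0]|[]//] := mem_eqs (z:=Wv n i) h (set22 _ _).
have /set2P [[e0']|[e0']] := mem_eqs (z:=Wv n j) (esym h) (set22 _ _).
  by move: (ordS2_neq j hn); rewrite -e0 -e0' eqxx.
by move: (ordS_neq j (ltnW hn)); rewrite -e0 -e0' eqxx.
Qed.

Lemma part2 n : 1 < n -> forall T : {set {set GkV n.+1}},
    dual_spanning_tree (Gk_adj n.+1) (Gk_cw n.+1) T ->
    exists2 F, F \in faces (Gk_adj n.+1) (Gk_cw n.+1) &
               (n.+2)./2 <= dual_deg T F.
Proof.
move=> hn T [_ hconn _].
pose F1 := face_of (Gk_cw n.+1) (Wv n (ix n 0), Wv n (ix n 1)).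
pose F2 := face_of (Gk_cw n.+1) (Pv n (ix n 0), Wv n (ix n 0)).
have hF1 : F1 \in faces (Gk_adj n.+1) (Gk_cw n.+1).
  by apply/imsetP; exists (Wv n (ix n 0), Wv n (ix n 1)); rewrite // inE /= ordS_ix eqxx.
have hF2 : F2 \in faces (Gk_adj n.+1) (Gk_cw n.+1).
  apply/imsetP; exists (Pv n (ix n 0), Wv n (ix n 0)) => //. by rewrite inE.
have F1all : forall i : 'I_n.+1, (Wv n i, Wv n (ordS i)) \in F1.
  move=> i; rewrite /F1 inE; have := F1_all n i.
  by rewrite -(ordS_ix n i) ix_val.
have F2a : forall i : 'I_n.+1, (Pv n i, Wv n i) \in F2.
  by move=> i; rewrite /F2 inE; case: (F2_all i (ltnW hn)).
have F2b : forall i : 'I_n.+1, (Wv n (ordS i), Pv n i) \in F2.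
  by move=> i; rewrite /F2 inE; case: (F2_all i (ltnW hn)).
have key : forall i : 'I_n.+1, exists e, e \in T :&: Es i.
  move=> i; pose Ti := face_of (Gk_cw n.+1) (Wv n (ordS i), Wv n i).
  have hTi : Ti \in faces (Gk_adj n.+1) (Gk_cw n.+1).
    apply/imsetP; exists (Wv n (ordS i), Wv n i) => //.
    by rewrite inE /= eqxx orbT.
  have /connectP [p] := hconn _ _ hTi hF1.
  case: p => [_ /= h1|G p /= /andP [hadj _] _].
    have := F1all i; rewrite h1 => /(@Ti_sub n i _ hn).
    case/in3P => [[e1]|//|//].
    by move: (ordS_neq i (ltnW hn)); rewrite -e1 eqxx.
  move: hadj; rewrite /dual_adj => /and3P [_ _ /existsP [e /andP [heT /andP [hinc _]]]].
  case/existsP: hinc => d /andP [hd /eqP hde].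
  exists e; rewrite in_setI heT /= -hde /Es /edge_of.
  by case/in3P: (Ti_sub hn hd) => ->; rewrite /E1 /E2 /E3 !inE eqxx ?orbT.
pose g i := odflt set0 [pick e in T :&: Es i].
have hg : forall i, g i \in T :&: Es i.
  move=> i; rewrite /g; case: pickP => [e he|h0] //=.
  by case: (key i) => e he; rewrite h0 in he.
have ginj : injective g.
  move=> i j e; have := hg i; have := hg j; rewrite !in_setI => /andP [_ hj] /andP [_ hi].
  by apply: (@edge_uniq n i j (g i) hn hi); rewrite e.
pose A1 := [set e in T | incident F1 e].
pose A2 := [set e in T | incident F2 e].
have hsub : g @: setT \subset A1 :|: A2.
  apply/subsetP => e /imsetP [i _ ->].
  have := hg i; rewrite in_setI => /andP [hT hE].
  rewrite in_setU !inE hT /=.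
  case/in3P: hE => ->.
  - apply/orP; left; apply/existsP; exists (Wv n i, Wv n (ordS i)).
    by rewrite F1all /edge_of /E1 /= setUC.
  - apply/orP; right; apply/existsP; exists (Pv n i, Wv n i).
    by rewrite F2a /edge_of /E2 /= setUC.
  - apply/orP; right; apply/existsP; exists (Wv n (ordS i), Pv n i).
    by rewrite F2b /edge_of /E3 /= setUC.
have hc : n.+1 <= #|A1| + #|A2|.
  have := subset_leq_card hsub; rewrite card_imset // cardsT card_ord cardsU.
  move=> h; apply: leq_trans h _; exact: leq_subr.
have hh := odd_double_half n.+2.
case: (leqP (n.+2)./2 #|A1|) => hA1.
  by exists F1.
exists F2 => //; rewrite /dual_deg -/A2.
move: hh hc hA1; rewrite -muln2; case: (odd n.+2) => /=; lia.
Qed.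

Theorem mainTheorem7 (k : nat) (hk : 3 <= k) :
  internally_3_connected (Gk_adj k) (Gk_outer k) /\
  forall T : {set {set GkV k}},
    dual_spanning_tree (Gk_adj k) (Gk_cw k) T ->
    exists2 F, F \in faces (Gk_adj k) (Gk_cw k) &
               (k.+1)./2 <= dual_deg T F.
Proof.
case: k hk => [//|n] hk.
have hn : 1 < n by [].
by split; [apply: part1 | apply: part2].
Qed.
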